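(* Let $G$ be a group, $N$ a normal subgroup, $m\in\mathbb{N}$, and $x_1,\dots,x_m\in N$ with $x_1\cdots x_m\in[G,N]$. Set $a_n=\mathrm{cl}_{G,N}(x_1^n+\cdots+x_m^n)+(m-1)$ for $n\in\mathbb{N}$. Then $(a_n)_n$ is subadditive; consequently the limit $\lim_{n\to\infty}\frac1n\mathrm{cl}_{G,N}(x_1^n+\cdots+x_m^n)$ exists.
   Context: $[G,N]$ is generated by $[g,x]=gxg^{-1}x^{-1}$ ($g\in G,x\in N$); $\mathrm{cl}_{G,N}$ is the word length on $[G,N]$ with respect to these generators. For $y_1,\dots,y_m\in N$ with $y_1\cdots y_m\in[G,N]$, $\mathrm{cl}_{G,N}(y_1+\cdots+y_m)=\inf_{g_1,\dots,g_{m-1}\in G}\mathrm{cl}_{G,N}(y_1g_1y_2g_1^{-1}\cdots g_{m-1}y_mg_{m-1}^{-1})$. *)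

(* Defs.v *)
From Stdlib Require Import Reals Lia List ClassicalEpsilon.
Import ListNotations.

Record Group := MkGroup {
  carrier :> Type;
  gmul : carrier -> carrier -> carrier;
  ginv : carrier -> carrier;
  gone : carrier;
  gmul_assoc : forall a b c, gmul a (gmul b c) = gmul (gmul a b) c;
  gmul_1l : forall a, gmul gone a = a;
  gmul_Vl : forall a, gmul (ginv a) a = gone
}.

Arguments gmul {G} : rename.
Arguments ginv {G} : rename.
Arguments gone {G} : rename.

Section Defs.
Variable G : Group.

Definition normal_subgroup (N : G -> Prop) : Prop :=
  N gone /\ (forall a b, N a -> N b -> N (gmul a b)) /\
  (forall a, N a -> N (ginv a)) /\
  (forall g a, N a -> N (gmul (gmul g a) (ginv g))).

Definition gprod (l : list G) : G := fold_right gmul gone l.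

Fixpoint gpow (x : G) (n : nat) : G :=
  match n with O => gone | S k => gmul x (gpow x k) end.

Definition comm (g x : G) : G := gmul (gmul (gmul g x) (ginv g)) (ginv x).

Variable N : G -> Prop.

Definition mixed_comm (y : G) : Prop := exists g x, N x /\ y = comm g x.

Definition cl_le (y : G) (k : nat) : Prop :=
  exists l : list G, length l = k /\
    Forall (fun z => mixed_comm z \/ mixed_comm (ginv z)) l /\ gprod l = y.

Definition in_GN (y : G) : Prop := exists k, cl_le y k.

(* least element of a set of naturals (junk value 0-ish if empty) *)
Definition nat_inf (P : nat -> Prop) : nat :=
  epsilon (inhabits 0) (fun n => P n /\ forall k, P k -> n <= k).

Definition cl (y : G) : nat := nat_inf (cl_le y).

Fixpoint twist (ys gs : list G) : G :=
  match ys, gs with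
  | y :: ys', g :: gs' => gmul (gmul (gmul g y) (ginv g)) (twist ys' gs')
  | _, _ => gone
  end.

Definition twisted_prod (ys gs : list G) : G :=
  match ys with
  | [] => gone
  | y :: ys' => gmul y (twist ys' gs)
  end.

(* cl_{G,N}(y_1 + ... + y_m) = inf over g_1..g_{m-1} *)
Definition cl_sum (ys : list G) : nat :=
  nat_inf (fun k => exists gs : list G,
             length gs = pred (length ys) /\ k = cl (twisted_prod ys gs)).

End Defs.

(* Main.v *)
Require Import Defs.
From Stdlib Require Import Reals List Lia Lra Classical ClassicalEpsilon.
Import ListNotations.

Lemma mul_Vr (G : Group) (a : G) : gmul a (ginv a) = gone.
Proof.
  set (X := gmul a (ginv a)).
  assert (HXX : gmul X X = X).
  { unfold X. rewrite <- gmul_assoc. rewrite (gmul_assoc G (ginv a) a (ginv a)).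
    rewrite gmul_Vl, gmul_1l. reflexivity. }
  rewrite <- (gmul_1l G X). rewrite <- (gmul_Vl G X) at 1.
  rewrite <- gmul_assoc, HXX. apply gmul_Vl.
Qed.

Lemma mul_1r (G : Group) (a : G) : gmul a gone = a.
Proof. rewrite <- (gmul_Vl G a), gmul_assoc, mul_Vr, gmul_1l. reflexivity. Qed.

Lemma mulKr (G : Group) (x a : G) : gmul (gmul x a) (ginv a) = x.
Proof. rewrite <- gmul_assoc, mul_Vr, mul_1r. reflexivity. Qed.

Lemma mulVKr (G : Group) (x a : G) : gmul (gmul x (ginv a)) a = x.
Proof. rewrite <- gmul_assoc, gmul_Vl, mul_1r. reflexivity. Qed.

Lemma inv_unique (G : Group) (a b : G) : gmul a b = gone -> ginv a = b.
Proof.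
  intro H. rewrite <- (mul_1r G (ginv a)), <- H, gmul_assoc, gmul_Vl, gmul_1l. reflexivity.
Qed.

Lemma inv_inv (G : Group) (a : G) : ginv (ginv a) = a.
Proof. apply inv_unique, gmul_Vl. Qed.

Lemma inv_mul (G : Group) (a b : G) : ginv (gmul a b) = gmul (ginv b) (ginv a).
Proof. apply inv_unique. rewrite !gmul_assoc, mulKr, mul_Vr. reflexivity. Qed.

Lemma inv_1 (G : Group) : ginv (@gone G) = gone.
Proof. apply inv_unique, gmul_1l. Qed.

Ltac gsimpl := repeat progress (rewrite ?inv_mul, ?inv_inv, ?inv_1, ?gmul_1l, ?mul_1r,
   ?gmul_Vl, ?mul_Vr, ?gmul_assoc, ?mulKr, ?mulVKr).

Definition gen (G : Group) (N : G -> Prop) (z : G) : Prop :=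
  mixed_comm G N z \/ mixed_comm G N (ginv z).

Lemma gprod_app (G : Group) (l1 l2 : list G) :
  gprod G (l1 ++ l2) = gmul (gprod G l1) (gprod G l2).
Proof.
  induction l1 as [|a l IH]; simpl. { rewrite gmul_1l; reflexivity. }
  unfold gprod in *. simpl. rewrite IH, gmul_assoc. reflexivity.
Qed.

Lemma cl_le_mul (G : Group) (N : G -> Prop) a b i j :
  cl_le G N a i -> cl_le G N b j -> cl_le G N (gmul a b) (i + j).
Proof.
  intros [l1 [H1 [F1 P1]]] [l2 [H2 [F2 P2]]].
  exists (l1 ++ l2). split. { rewrite length_app; lia. }
  split. { apply Forall_app; auto. }
  rewrite gprod_app, P1, P2. reflexivity.
Qed.

Lemma gen_conj (G : Group) (N : G -> Prop) (HN : normal_subgroup G N) (c z : G) :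
  gen G N z -> gen G N (gmul (gmul c z) (ginv c)).
Proof.
  destruct HN as [_ [_ [_ Hc]]].
  intros [[g [x [Hx Hz]]] | [g [x [Hx Hz]]]].
  - left. exists (gmul (gmul c g) (ginv c)), (gmul (gmul c x) (ginv c)).
    split; [apply Hc; auto|]. subst z. unfold comm. gsimpl. reflexivity.
  - right. exists (gmul (gmul c g) (ginv c)), (gmul (gmul c x) (ginv c)).
    split; [apply Hc; auto|].
    replace (ginv (gmul (gmul c z) (ginv c))) with (gmul (gmul c (ginv z)) (ginv c))
      by (gsimpl; reflexivity).
    rewrite Hz. unfold comm. gsimpl. reflexivity.
Qed.

Lemma cl_le_conj (G : Group) (N : G -> Prop) (HN : normal_subgroup G N) (c y : G) k :
  cl_le G N y k -> cl_le G N (gmul (gmul c y) (ginv c)) k.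
Proof.
  intros [l [Hl [F P]]].
  exists (map (fun z => gmul (gmul c z) (ginv c)) l). split. { rewrite length_map; auto. }
  split. { rewrite Forall_map. eapply Forall_impl; [|exact F]. intros z Hz. apply gen_conj; auto. }
  subst y. clear Hl F. induction l as [|a l IH]; unfold gprod in *; simpl.
  - gsimpl. reflexivity.
  - rewrite IH. gsimpl. reflexivity.
Qed.

Lemma gen_one (G : Group) (N : G -> Prop) (HN : normal_subgroup G N) : gen G N gone.
Proof.
  left. exists gone, gone. split; [apply HN|]. unfold comm. gsimpl. reflexivity.
Qed.

Lemma cl_le_S (G : Group) (N : G -> Prop) (HN : normal_subgroup G N) y k :
  cl_le G N y k -> cl_le G N y (S k).
Proof.
  intros [l [Hl [F P]]]. exists (gone :: l). simpl. split; [lia|].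
  split. { constructor; auto. apply gen_one; auto. }
  unfold gprod in *. simpl. rewrite P, gmul_1l. reflexivity.
Qed.

Lemma cl_le_mono (G : Group) (N : G -> Prop) (HN : normal_subgroup G N) y k k' :
  k <= k' -> cl_le G N y k -> cl_le G N y k'.
Proof.
  intros Hk H. induction Hk; auto. apply cl_le_S; auto.
Qed.

Lemma cl_le_gen (G : Group) (N : G -> Prop) c : gen G N c -> cl_le G N c 1.
Proof.
  intro H. exists [c]. split; [reflexivity|]. split; [constructor; auto|].
  unfold gprod. simpl. apply mul_1r.
Qed.

Lemma cl_le_insert (G : Group) (N : G -> Prop) (HN : normal_subgroup G N) P Q c k :
  gen G N c -> cl_le G N (gmul P Q) k -> cl_le G N (gmul P (gmul c Q)) (S k).
Proof.
  intros Hc H.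
  replace (gmul P (gmul c Q)) with (gmul (gmul (gmul P c) (ginv P)) (gmul P Q))
    by (gsimpl; reflexivity).
  apply (cl_le_mul G N _ _ 1 k); auto.
  apply cl_le_conj; auto. apply cl_le_gen; auto.
Qed.

Lemma comm_gen (G : Group) (N : G -> Prop) u y : N y -> gen G N (comm G u y).
Proof. intro H. left. exists u, y. auto. Qed.

Lemma conj_as_comm (G : Group) (u y : G) :
  gmul (gmul u y) (ginv u) = gmul (comm G u y) y.
Proof. unfold comm. gsimpl. reflexivity. Qed.

Lemma nat_min_ex (P : nat -> Prop) : (exists n, P n) -> exists n, P n /\ forall k, P k -> n <= k.
Proof.
  intros [n Hn]. revert Hn. induction n as [n IH] using (well_founded_induction Nat.lt_wf_0).
  intro Hn. destruct (classic (exists k, k < n /\ P k)) as [[k [Hk Pk]] | Hno].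
  - apply (IH k Hk Pk).
  - exists n. split; auto. intros k Pk. destruct (Nat.lt_ge_cases k n); auto.
    exfalso. apply Hno. eauto.
Qed.

Lemma nat_inf_spec (P : nat -> Prop) : (exists n, P n) ->
  P (nat_inf P) /\ forall k, P k -> nat_inf P <= k.
Proof. intro H. unfold nat_inf. apply epsilon_spec. apply nat_min_ex; auto. Qed.

Lemma cl_spec (G : Group) (N : G -> Prop) y k :
  cl_le G N y k -> cl_le G N y (cl G N y) /\ cl G N y <= k.
Proof.
  intro H. unfold cl. destruct (nat_inf_spec (cl_le G N y)) as [H1 H2]; eauto.
Qed.

Lemma cl_le_eq (G : Group) (N : G -> Prop) a b k : a = b -> cl_le G N b k -> cl_le G N a k.
Proof. intros ->; auto. Qed.

Lemma twist_conj (G : Group) (c : G) ys gs :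
  gmul (gmul c (twist G ys gs)) (ginv c) = twist G ys (map (gmul c) gs).
Proof.
  revert gs; induction ys as [|y ys IH]; intros [|g gs]; simpl; try (gsimpl; reflexivity).
  rewrite <- IH. gsimpl. reflexivity.
Qed.

Lemma gen_main (G : Group) (N : G -> Prop) (HN : normal_subgroup G N) (f1 f2 : G -> G) xs :
  Forall (fun x => N (f1 x) /\ N (f2 x)) xs ->
  forall gs hs, length gs = length xs -> length hs = length xs ->
  forall P Q k, cl_le G N (gmul P (gmul (twist G (map f1 xs) gs) (gmul (twist G (map f2 xs) hs) Q))) k ->
  exists gs', length gs' = length xs /\
   cl_le G N (gmul P (gmul (twist G (map (fun x => gmul (f1 x) (f2 x)) xs) gs') Q)) (k + length xs).
Proof.
  induction xs as [|x xs IH]; intros HF gs hs Hg Hh P Q k H.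
  - exists []. split; [reflexivity|]. simpl in *. rewrite Nat.add_0_r.
    destruct gs, hs; simpl in *; try discriminate. rewrite gmul_1l in H. exact H.
  - inversion HF as [|? ? [Hy Hz] HF']; subst.
    destruct gs as [|g gs]; [discriminate|]. destruct hs as [|h hs]; [discriminate|].
    simpl in Hg, Hh. injection Hg as Hg. injection Hh as Hh.
    simpl in H.
    pose (Z := gmul (gmul h (f2 x)) (ginv h)).
    assert (HZ : N Z). { unfold Z. apply HN; auto. }
    assert (H1 : cl_le G N (gmul (gmul P (gmul (gmul g (f1 x)) (ginv g)))
          (gmul (comm G (gmul g (ginv h)) Z) (gmul Z
            (gmul (twist G (map f1 xs) (map (gmul (ginv Z)) gs))
                 (gmul (twist G (map f2 xs) hs) Q))))) (S k)).
    { apply cl_le_insert; auto. apply comm_gen; auto.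
      rewrite <- twist_conj. refine (cl_le_eq _ _ _ _ _ _ H).
      unfold Z. gsimpl. reflexivity. }
    destruct (IH HF' (map (gmul (ginv Z)) gs) hs) with
      (P := gmul P (gmul (gmul g (gmul (f1 x) (f2 x))) (ginv g))) (Q := Q) (k := S k)
      as [gs' [Hl H2]].
    + rewrite length_map; auto.
    + auto.
    + refine (cl_le_eq _ _ _ _ _ _ H1). unfold Z, comm. gsimpl. reflexivity.
    + exists (g :: gs'). split; [simpl; auto|].
      replace (k + length (x :: xs)) with (S k + length xs) by (simpl; lia).
      refine (cl_le_eq _ _ _ _ _ _ H2). simpl. gsimpl. reflexivity.
Qed.

Lemma change_conj (G : Group) (N : G -> Prop) (HN : normal_subgroup G N) ys :
  Forall N ys -> forall gs gs2, length gs = length ys -> length gs2 = length ys ->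
  forall P Q k, cl_le G N (gmul P (gmul (twist G ys gs) Q)) k ->
  cl_le G N (gmul P (gmul (twist G ys gs2) Q)) (k + length ys).
Proof.
  induction ys as [|y ys IH]; intros HF gs gs2 Hg Hg2 P Q k H.
  - destruct gs, gs2; simpl in *; try discriminate. rewrite Nat.add_0_r. exact H.
  - inversion HF as [|? ? Hy HF']; subst.
    destruct gs as [|g gs]; [discriminate|]. destruct gs2 as [|g2 gs2]; [discriminate|].
    simpl in Hg, Hg2. injection Hg as Hg. injection Hg2 as Hg2. simpl in H |- *.
    rewrite <- gmul_assoc in H.
    replace (k + S (length ys)) with (S k + length ys) by lia.
    assert (HY : N (gmul (gmul g y) (ginv g))) by (apply HN; auto).
    assert (H1 := cl_le_insert G N HN P (gmul (gmul (gmul g y) (ginv g)) (gmul (twist G ys gs) Q))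
               (comm G (gmul g2 (ginv g)) (gmul (gmul g y) (ginv g))) k
               (comm_gen G N _ _ HY) H).
    specialize (IH HF' gs gs2 Hg Hg2 (gmul P (gmul (gmul g2 y) (ginv g2))) Q (S k)).
    refine (cl_le_eq _ _ _ _ _ _ (IH _)). { gsimpl. reflexivity. }
    refine (cl_le_eq _ _ _ _ _ _ H1). unfold comm. gsimpl. reflexivity.
Qed.

Lemma gpow_add (G : Group) (x : G) n k : gpow G x (n + k) = gmul (gpow G x n) (gpow G x k).
Proof. induction n; simpl. { rewrite gmul_1l; reflexivity. } rewrite IHn, gmul_assoc. reflexivity. Qed.

Lemma gpow_1 (G : Group) (x : G) : gpow G x 1 = x.
Proof. simpl. apply mul_1r. Qed.

Lemma gpow_N (G : Group) (N : G -> Prop) (HN : normal_subgroup G N) x n : N x -> N (gpow G x n).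
Proof. intro Hx. induction n; simpl; [apply HN|]. apply HN; auto. Qed.

Lemma twist_ones (G : Group) (l : list G) gs : twist G (map (fun _ => gone) l) gs = gone.
Proof.
  revert gs; induction l as [|a l IH]; intros [|g gs]; simpl; auto.
  rewrite IH. gsimpl. reflexivity.
Qed.

Lemma twist_repeat (G : Group) (ys : list G) : twist G ys (repeat gone (length ys)) = gprod G ys.
Proof.
  induction ys as [|y ys IH]; simpl; auto. rewrite IH. unfold gprod. simpl. gsimpl. reflexivity.
Qed.

Lemma cl_le_one (G : Group) (N : G -> Prop) : cl_le G N gone 0.
Proof. exists []. split; [reflexivity|]. split; [constructor|reflexivity]. Qed.


Definition pw (G : Group) (xs : list G) (n : nat) := map (fun x => gpow G x n) xs.

Lemma twisted_pw (G : Group) x1 xr m gs : twisted_prod G (pw G (x1 :: xr) m) gs =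
  gmul (gpow G x1 m) (twist G (map (fun x => gpow G x m) xr) gs).
Proof. reflexivity. Qed.

Lemma combine (G : Group) (N : G -> Prop) (HN : normal_subgroup G N) x1 xr :
  Forall N xr -> forall n k gs hs A B, length gs = length xr -> length hs = length xr ->
  cl_le G N (twisted_prod G (pw G (x1 :: xr) n) gs) A ->
  cl_le G N (twisted_prod G (pw G (x1 :: xr) k) hs) B ->
  exists gs', length gs' = length xr /\
    cl_le G N (twisted_prod G (pw G (x1 :: xr) (n + k)) gs') (A + B + length xr).
Proof.
  intros HF n k gs hs A B Hg Hh HA HB.
  unfold pw, twisted_prod in *. simpl in HA, HB |- *.
  assert (H := cl_le_mul G N _ _ _ _ HA HB).
  set (z1 := gpow G x1 k) in *. set (y1 := gpow G x1 n) in *.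
  destruct (gen_main G N HN (fun x => gpow G x n) (fun x => gpow G x k) xr) with
    (gs := map (gmul (ginv z1)) gs) (hs := hs) (P := gmul y1 z1) (Q := @gone G) (k := A + B)
    as [gs' [Hl H2]].
  - eapply Forall_impl; [|exact HF]. intros x Hx. split; apply gpow_N; auto.
  - rewrite length_map; auto.
  - auto.
  - rewrite <- twist_conj. refine (cl_le_eq _ _ _ _ _ _ H). gsimpl. reflexivity.
  - exists gs'. split; auto. refine (cl_le_eq _ _ _ _ _ _ H2).
    rewrite gpow_add.
    replace (map (fun x => gpow G x (n + k)) xr) with
      (map (fun x => gmul (gpow G x n) (gpow G x k)) xr)
      by (apply map_ext; intro; symmetry; apply gpow_add).
    unfold y1, z1. gsimpl. reflexivity.
Qed.

Lemma twisted_exists (G : Group) (N : G -> Prop) (HN : normal_subgroup G N) x1 xr :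
  Forall N (x1 :: xr) -> in_GN G N (gprod G (x1 :: xr)) ->
  forall n gs, length gs = length xr -> exists k, cl_le G N (twisted_prod G (pw G (x1 :: xr) n) gs) k.
Proof.
  intros HF Hprod. inversion HF as [|? ? Hx1 HF']; subst.
  induction n as [|n IH]; intros gs Hg.
  - exists 0. unfold pw, twisted_prod. simpl.
    change (map (fun x => gpow G x 0) xr) with (map (fun _ : G => @gone G) xr).
    rewrite twist_ones, gmul_1l. apply cl_le_one.
  - destruct (IH (repeat gone (length xr))) as [k1 H1]. { apply repeat_length. }
    destruct Hprod as [k2 H2].
    assert (H3 : cl_le G N (twisted_prod G (pw G (x1 :: xr) 1) (repeat gone (length xr))) k2).
    { refine (cl_le_eq _ _ _ _ _ _ H2). unfold pw, twisted_prod. simpl map.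
      rewrite <- (length_map (fun x => gpow G x 1) xr). rewrite twist_repeat.
      rewrite mul_1r. change (gprod G (x1::xr)) with (gmul x1 (gprod G xr)).
      f_equal. f_equal. rewrite (map_ext _ (fun x => x)) by (intro; apply gpow_1). apply map_id. }
    destruct (combine G N HN x1 xr HF' n 1 _ _ _ _ (repeat_length _ _) (repeat_length _ _) H1 H3)
      as [gs' [Hl H4]].
    rewrite Nat.add_1_r in H4.
    rewrite twisted_pw in H4 |- *.
    rewrite <- (mul_1r G (twist _ _ gs')) in H4.
    eexists. refine (cl_le_eq _ _ _ _ _ _ (change_conj G N HN _ _ gs' gs _ _ _ _ _ H4)).
    + rewrite mul_1r. reflexivity.
    + eapply Forall_map, Forall_impl; [|exact HF']. intros. apply gpow_N; auto.
    + rewrite length_map; auto.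
    + rewrite length_map; auto.
Qed.

Lemma cl_sum_spec (G : Group) (N : G -> Prop) y ys :
  (exists gs, length gs = length ys /\ cl_sum G N (y :: ys) = cl G N (twisted_prod G (y :: ys) gs)) /\
  forall gs, length gs = length ys -> cl_sum G N (y :: ys) <= cl G N (twisted_prod G (y :: ys) gs).
Proof.
  unfold cl_sum. simpl pred.
  destruct (nat_inf_spec (fun k => exists gs : list G, length gs = length ys /\
     k = cl G N (twisted_prod G (y :: ys) gs))) as [H1 H2].
  - exists (cl G N (twisted_prod G (y :: ys) (repeat gone (length ys)))).
    exists (repeat gone (length ys)). split; auto. apply repeat_length.
  - split; auto. intros gs Hg. apply H2. eauto.
Qed.

Lemma subadd (G : Group) (N : G -> Prop) (HN : normal_subgroup G N) x1 xr :
  Forall N (x1 :: xr) -> in_GN G N (gprod G (x1 :: xr)) ->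
  forall n k, cl_sum G N (pw G (x1 :: xr) (n + k)) + length xr <=
    (cl_sum G N (pw G (x1 :: xr) n) + length xr) + (cl_sum G N (pw G (x1 :: xr) k) + length xr).
Proof.
  intros HF Hprod n k.
  assert (HF' : Forall N xr) by (inversion HF; auto).
  assert (Hsp : forall m, (exists gs, length gs = length xr /\
     cl_sum G N (pw G (x1 :: xr) m) = cl G N (twisted_prod G (pw G (x1 :: xr) m) gs)) /\
     forall gs, length gs = length xr -> cl_sum G N (pw G (x1 :: xr) m) <=
         cl G N (twisted_prod G (pw G (x1 :: xr) m) gs)).
  { intro m. unfold pw at 1 3 4. simpl map.
    destruct (cl_sum_spec G N (gpow G x1 m) (map (fun x => gpow G x m) xr)) as [[gs [Hl E]] Hm].
    rewrite length_map in Hl, Hm. split; eauto. }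
  destruct (Hsp n) as [[gs [Hg E1]] _]. destruct (Hsp k) as [[hs [Hh E2]] _].
  destruct (twisted_exists G N HN x1 xr HF Hprod n gs Hg) as [a1 Ha1].
  destruct (twisted_exists G N HN x1 xr HF Hprod k hs Hh) as [a2 Ha2].
  destruct (cl_spec _ _ _ _ Ha1) as [Hc1 _]. destruct (cl_spec _ _ _ _ Ha2) as [Hc2 _].
  destruct (combine G N HN x1 xr HF' n k gs hs _ _ Hg Hh Hc1 Hc2) as [gs' [Hl H3]].
  destruct (cl_spec _ _ _ _ H3) as [_ H4].
  destruct (Hsp (n + k)) as [_ Hm]. specialize (Hm gs' Hl). lia.
Qed.

Lemma subadd_mult (a : nat -> nat) (Ha : forall n k, a (n + k) <= a n + a k) p :
  forall q r, a (q * p + r) <= q * a p + a r.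
Proof.
  induction q; intro r; simpl; [lia|].
  rewrite <- Nat.add_assoc. specialize (Ha p (q * p + r)). specialize (IHq r). lia.
Qed.

Lemma subadd_lin (a : nat -> nat) (Ha : forall n k, a (n + k) <= a n + a k) :
  forall r, a r <= a 0 + r * a 1.
Proof.
  induction r; [lia|]. rewrite <- Nat.add_1_r. specialize (Ha r 1). lia.
Qed.

Lemma div_nonneg (x y : R) : (0 <= x)%R -> (0 < y)%R -> (0 <= x / y)%R.
Proof. intros. unfold Rdiv. apply Rmult_le_pos; auto. left. apply Rinv_0_lt_compat; auto. Qed.

Lemma fekete (a : nat -> nat) (Ha : forall n k, a (n + k) <= a n + a k) :
  exists l, Un_cv (fun n => INR (a n) / INR n)%R l.
Proof.
  set (E := fun x : R => exists n, (1 <= n)%nat /\ x = (- (INR (a n) / INR n))%R).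
  assert (Hpos : forall n, (1 <= n)%nat -> (0 < INR n)%R).
  { intros n Hn. apply lt_0_INR. lia. }
  assert (Hb : bound E).
  { exists 0%R. intros x [n [Hn ->]].
    assert (0 <= INR (a n) / INR n)%R.
    { apply div_nonneg; [apply pos_INR | apply Hpos; auto]. } lra. }
  assert (Hne : exists x, E x) by (exists (- (INR (a 1%nat) / INR 1%nat))%R; exists 1%nat; auto).
  destruct (completeness E Hb Hne) as [m [Hub Hlub]].
  set (l := (- m)%R).
  assert (F1 : forall n, (1 <= n)%nat -> (l <= INR (a n) / INR n)%R).
  { intros n Hn. assert (H := Hub _ (ex_intro _ n (conj Hn eq_refl))). unfold l. lra. }
  assert (Hl0 : (0 <= l)%R).
  { assert (m <= 0)%R. { apply Hlub. intros x [n [Hn ->]].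
      assert (0 <= INR (a n) / INR n)%R.
      { apply div_nonneg; [apply pos_INR | apply Hpos; auto]. } lra. }
    unfold l; lra. }
  assert (F2 : forall e, (0 < e)%R -> exists p, (1 <= p)%nat /\ (INR (a p) / INR p < l + e)%R).
  { intros e He. apply NNPP. intro Hno.
    assert (m <= m - e)%R.
    { apply Hlub. intros x [n [Hn ->]].
      destruct (Rlt_or_le (INR (a n) / INR n) (l + e)) as [Hlt|Hge].
      - exfalso. apply Hno. eauto.
      - unfold l in Hge. lra. }
    lra. }
  exists l. intros eps Heps.
  destruct (F2 (eps / 2)%R) as [p [Hp1 Hp]]; [lra|].
  set (M := INR (a 0 + p * a 1)).
  assert (HM0 : (0 <= M)%R) by apply pos_INR.
  destruct (archimed_cor1 (eps / (2 * (M + 1)))%R) as [N [HN1 HN2]].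
  { apply Rdiv_lt_0_compat; lra. }
  exists (max N 1). intros n Hn.
  assert (Hn1 : (1 <= n)%nat) by lia.
  assert (HnN : (N <= n)%nat) by lia.
  assert (Hnp := Hpos n Hn1).
  set (q := (n / p)%nat). set (r := (n mod p)%nat).
  assert (Hdm : n = (q * p + r)%nat).
  { unfold q, r. rewrite Nat.mul_comm. apply Nat.div_mod. lia. }
  assert (Hr : (r < p)%nat) by (apply Nat.mod_upper_bound; lia).
  assert (Hnat : (a n <= q * a p + (a 0 + p * a 1))%nat).
  { rewrite Hdm. pose proof (subadd_mult a Ha p q r). pose proof (subadd_lin a Ha r).
    assert (r * a 1 <= p * a 1)%nat by (apply Nat.mul_le_mono_r; lia). lia. }
  assert (Hqp : (q * p <= n)%nat) by lia.
  apply le_INR in Hnat. rewrite plus_INR, mult_INR in Hnat. fold M in Hnat.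
  apply le_INR in Hqp. rewrite mult_INR in Hqp.
  assert (Hpp := Hpos p Hp1).
  assert (Hap : (INR (a p) < INR p * (l + eps / 2))%R).
  { set (u := (INR (a p) / INR p)%R) in Hp.
    replace (INR (a p)) with (u * INR p)%R by (unfold u; field; lra). nra. }
  assert (HqI : (0 <= INR q)%R) by apply pos_INR.
  assert (Hq2 : (INR q * INR (a p) <= INR n * (l + eps / 2))%R).
  { assert (INR q * INR (a p) <= INR q * (INR p * (l + eps / 2)))%R by nra. nra. }
  assert (HNpos : (0 < INR N)%R) by (apply lt_0_INR; lia).
  assert (HNn : (INR N <= INR n)%R) by (apply le_INR; auto).
  assert (HNe : (1 < eps / (2 * (M + 1)) * INR N)%R).
  { assert (INR N * / INR N = 1)%R by (field; lra). nra. }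
  assert (HMn : (M < INR n * (eps / 2))%R).
  { assert (eps / (2 * (M + 1)) * INR N * (M + 1) = INR N * (eps / 2))%R by (field; lra).
    nra. }
  assert (Hlow := F1 n Hn1).
  assert (Hup : (INR (a n) / INR n < l + eps)%R).
  { apply (Rmult_lt_reg_r (INR n)); auto.
    replace (INR (a n) / INR n * INR n)%R with (INR (a n)) by (field; lra). nra. }
  unfold R_dist. rewrite Rabs_right; lra.
Qed.

Lemma const_div_cv (C : R) : Un_cv (fun n => C / INR n)%R 0%R.
Proof.
  intros eps Heps.
  destruct (archimed_cor1 (eps / (Rabs C + 1)))%R as [N [HN1 HN2]].
  { apply Rdiv_lt_0_compat; auto. pose proof (Rabs_pos C). lra. }
  exists N. intros n Hn. unfold R_dist. rewrite Rminus_0_r.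
  assert (HNpos : (0 < INR N)%R) by (apply lt_0_INR; lia).
  assert (HNn : (INR N <= INR n)%R) by (apply le_INR; lia).
  assert (Hnpos : (0 < INR n)%R) by lra.
  unfold Rdiv. rewrite Rabs_mult, Rabs_inv, (Rabs_right (INR n)) by lra.
  pose proof (Rabs_pos C).
  assert (Hi : (/ INR n <= / INR N)%R) by (apply Rinv_le_contravar; auto).
  assert (eps / (Rabs C + 1) * (Rabs C + 1) = eps)%R by (field; lra).
  assert (0 < / INR n)%R by (apply Rinv_0_lt_compat; auto).
  nra.
Qed.

Theorem lemma5p11 (G : Group) (N : G -> Prop) (HN : normal_subgroup G N)
  (xs : list G) (Hm : xs <> nil) (HxN : Forall N xs)
  (Hprod : in_GN G N (gprod G xs)) :
  let a := fun n : nat =>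
    (cl_sum G N (map (fun x => gpow G x n) xs) + (length xs - 1))%nat in
  (forall n k : nat, (a (n + k) <= a n + a k)%nat) /\
  exists l : R,
    Un_cv (fun n : nat => INR (cl_sum G N (map (fun x => gpow G x n) xs)) / INR n)%R l.
Proof.
  intro a. destruct xs as [|x1 xr]; [contradiction|].
  assert (Hsub : forall n k : nat, (a (n + k) <= a n + a k)%nat).
  { intros n k. unfold a. replace (length (x1 :: xr) - 1)%nat with (length xr) by (simpl; lia).
    exact (subadd G N HN x1 xr HxN Hprod n k). }
  split; auto.
  destruct (fekete a Hsub) as [l Hl].
  exists (l - 0)%R.
  assert (H := CV_minus _ _ _ _ Hl (const_div_cv (INR (length (x1 :: xr) - 1)))).
  intros eps Heps. destruct (H eps Heps) as [M HM]. exists M. intros n Hn.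
  specialize (HM n Hn). unfold a in HM. rewrite plus_INR in HM.
  replace ((INR (cl_sum G N (map (fun x => gpow G x n) (x1 :: xr))) +
     INR (length (x1 :: xr) - 1)) / INR n - INR (length (x1 :: xr) - 1) / INR n)%R
    with (INR (cl_sum G N (map (fun x => gpow G x n) (x1 :: xr))) / INR n)%R in HM
    by (unfold Rdiv; ring).
  exact HM.
Qed.
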